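(* Let $\alpha$ be an algebraic integer lying in a quadratic number field. Then there is a natural number $n$ such that $\alpha+n$ is a chromatic root.
   Context: For a finite simple graph $G$, the chromatic polynomial $P_G(q)$ is the unique polynomial whose value at each positive integer $q$ is the number of proper colourings of $G$ with $q$ colours. A chromatic root is a complex number $\alpha$ such that $P_G(\alpha)=0$ for some finite simple graph $G$. A quadratic number field is a field extension of $\mathbb{Q}$ of degree $2$. *)

(* Defs.v *)
From HB Require Import structures.
From mathcomp Require Import all_boot all_order all_algebra all_field.
Set Implicit Arguments. Unset Strict Implicit. Unset Printing Implicit Defensive.
Import Order.TTheory GRing.Theory Num.Theory.
Local Open Scope ring_scope.

Definition simple_graph (V : finType) (e : rel V) : Prop :=
  symmetric e /\ irreflexive e.

Definition num_proper_colourings (V : finType) (e : rel V) (q : nat) : nat :=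
  #|[set f : {ffun V -> 'I_q} | [forall x, forall y, e x y ==> (f x != f y)]]|.

(* p is the chromatic polynomial of (V, e): its value at every positive
   integer q is the number of proper q-colourings (such p is unique). *)
Definition is_chromatic_poly (V : finType) (e : rel V) (p : {poly algC}) : Prop :=
  forall q : nat, (0 < q)%N -> p.[q%:R] = (num_proper_colourings e q)%:R.

(* A chromatic root: a (complex) root of the chromatic polynomial of some
   finite simple graph. Chromatic roots are algebraic, so algC suffices. *)
Definition chromatic_root (a : algC) : Prop :=
  exists (V : finType) (e : rel V) (p : {poly algC}),
    [/\ simple_graph e, is_chromatic_poly e p & root p a].

Definition in_quadratic_field (a : algC) : Prop :=
  exists (L : fieldExtType rat) (f : {rmorphism L -> algC}) (x : L),
    \dim (fullv : {vspace L}) = 2%N /\ f x = a.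

(* Main.v *)
Require Import Defs.
From HB Require Import structures.
From mathcomp Require Import all_boot all_order all_algebra all_field.
From mathcomp Require Import ring lra zify.
Set Implicit Arguments. Unset Strict Implicit. Unset Printing Implicit Defensive.
Import Order.TTheory GRing.Theory Num.Theory.
Local Open Scope ring_scope.

Lemma quad_poly (a : algC) : in_quadratic_field a ->
  exists q : {poly rat}, [/\ q \is monic, (size q <= 3)%N & root (map_poly ratr q) a].
Proof.
case=> L [f [x [dimL <-]]].
have [/polyOver1P[q Dq] mon] := (minPolyOver 1 x, monic_minPoly 1 x).
exists q; split.
- by rewrite -(map_monic (in_alg L)) -Dq.
- rewrite -(size_map_poly (in_alg L)) -Dq size_minPoly ltnS.
  have := dim_Fadjoin 1 x; rewrite dimv1 muln1 => <-.
  by rewrite -dimL dimvS ?subvf.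
- have := root_minPoly 1 x; rewrite Dq -(fmorph_root f) -map_poly_comp.
  congr (root _ _); apply: eq_map_poly => r /=.
  by rewrite alg_num_field fmorph_rat.
Qed.

Lemma quad_int (a : algC) : a \in Aint -> in_quadratic_field a ->
  exists b c : int, a ^+ 2 - b%:~R * a + c%:~R = 0.
Proof.
move=> Aa /quad_poly [q [monq szq rq]].
have [p [Dp monp dvp]] := minCpolyP a.
have szp : (size (minCpoly a) <= 3)%N.
  rewrite Dp size_map_poly; apply: leq_trans szq.
  by apply: dvdp_leq; [exact: monic_neq0 | rewrite -dvp].
have r0 := root_minCpoly a.
have gt1 := size_minCpoly a.
have mon := minCpoly_monic a.
move: Aa; rewrite unfold_in => /polyOverP intp.
have /intrP[c0 Hc0] := intp 0%N.
have /intrP[c1 Hc1] := intp 1%N.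
move: r0; rewrite /root horner_coef.
have [sz2 | sz3] : size (minCpoly a) = 2%N \/ size (minCpoly a) = 3%N.
  by move: gt1 szp; case: (size _) => [|[|[|[|]]]] //; auto.
- have l1 : (minCpoly a)`_1 = 1 by move/monicP: mon; rewrite /lead_coef sz2.
  rewrite sz2 !big_ord_recr big_ord0 /= add0r expr0 expr1 mulr1 l1 mul1r Hc0 => /eqP h.
  exists (- 2 * c0), (c0 ^+ 2).
  have ha : a = - c0%:~R by apply/eqP; rewrite -addr_eq0 addrC h.
  rewrite ha rmorphM rmorphN /= rmorphXn /=; ring.
- have l2 : (minCpoly a)`_2 = 1 by move/monicP: mon; rewrite /lead_coef sz3.
  rewrite sz3 !big_ord_recr big_ord0 /= add0r expr0 expr1 mulr1 l2 mul1r Hc0 Hc1 => /eqP h.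
  exists (- c1), c0; rewrite -h rmorphN /=; ring.
Qed.
Lemma params (b c : int) : exists s t n : nat,
  (s + t + 1)%:R = b + 2 * n%:R /\ (s * t + s + t)%:R = c + n%:R ^+ 2 + b * n%:R :> int.
Proof.
pose j : int := (`|b| + `|c| + 1)%:R.
pose k : int := j ^+ 2 + j * b + c.
pose d : int := b + 2 * j + 1.
have jb : `|b|%:R <= j - 1 :> int by rewrite /j; lia.
have jc : `|c|%:R <= j - 1 :> int by rewrite /j; lia.
have hb1 : - (j - 1) <= b by move: jb; lia.
have hc1 : - (j - 1) <= c by move: jc; lia.
have j1 : 1 <= j by rewrite /j; lia.
have k0 : 0 <= k.
  rewrite /k; have : j * (- (j - 1)) <= j * b by rewrite ler_pM2l //; lia.
  nia.
have d0 : 0 <= d by rewrite /d; lia.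
have j0 : 0 <= j by lia.
exists (absz (d + k)), (absz k), (absz j + 1 + absz k)%N.
have e1 : (absz (d + k))%:R = d + k :> int by rewrite natz gez0_abs // addr_ge0.
have e2 : (absz k)%:R = k :> int by rewrite natz gez0_abs.
have e3 : (absz j)%:R = j :> int by rewrite natz gez0_abs.
rewrite !natrD !natrM e1 e2 e3 /d /k; split; ring.
Qed.
Definition GV (s t : nat) : finType := (('I_s + 'I_t) + bool)%type.

Definition side (s t : nat) (i : 'I_s + 'I_t) (b : bool) : bool :=
  match i with inl _ => ~~ b | inr _ => b end.

Definition gedge (s t : nat) (u v : GV s t) : bool :=
  match u, v with
  | inl i, inl j => i != j
  | inl i, inr b => side i b
  | inr b, inl i => side i b
  | inr b1, inr b2 => b1 != b2
  end.

Lemma gedge_simple s t : simple_graph (@gedge s t).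
Proof.
split.
- by move=> [[i|i]|b] [[j|j]|b'] //=; rewrite eq_sym.
- by move=> [[i|i]|b] /=; rewrite eqxx.
Qed.

Definition phi s t q (u : {ffun ('I_s + 'I_t) -> 'I_q} * 'I_q * 'I_q)
  : {ffun GV s t -> 'I_q} :=
  [ffun v => match v with inl w => u.1.1 w | inr true => u.1.2 | inr false => u.2 end].

Definition psi s t q (f : {ffun GV s t -> 'I_q}) :
  {ffun ('I_s + 'I_t) -> 'I_q} * 'I_q * 'I_q :=
  ([ffun w => f (inl w)], f (inr true), f (inr false)).

Lemma phiK s t q : cancel (@phi s t q) (@psi s t q).
Proof. by move=> [[g x] y]; rewrite /psi /phi /= !ffunE; congr (_, _, _); apply/ffunP => w; rewrite !ffunE. Qed.

Lemma psiK s t q : cancel (@psi s t q) (@phi s t q).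
Proof. by move=> f; apply/ffunP => [[w|[]]]; rewrite !ffunE. Qed.

Lemma proper_phi s t q g x y :
  [forall u, forall v, gedge u v ==> (@phi s t q (g, x, y) u != phi (g, x, y) v)] =
  [&& injectiveb g, [forall j, g (inr j) != x], [forall i, g (inl i) != y] & x != y].
Proof.
apply/idP/idP.
- move=> /forallP H.
  have H' : forall u v, gedge u v -> phi (g, x, y) u != phi (g, x, y) v.
    by move=> u v; move: (H u) => /forallP /(_ v) /implyP.
  apply/and4P; split.
  + apply/injectiveP => w1 w2 e; apply/eqP; apply/negPn/negP => ne.
    by have := H' (inl w1) (inl w2) ne; rewrite !ffunE e eqxx.
  + by apply/forallP => j; have := H' (inl (inr j)) (inr true) isT; rewrite !ffunE.
  + by apply/forallP => i; have := H' (inl (inl i)) (inr false) isT; rewrite !ffunE.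
  + by have := H' (inr true) (inr false) isT; rewrite !ffunE.
- case/and4P => /injectiveP inj /forallP hj /forallP hi xy.
  apply/forallP => u; apply/forallP => v; apply/implyP.
  case: u => [[i|i]|[]] ; case: v => [[j|j]|[]] //= e; rewrite !ffunE //=.
  all: by rewrite ?(inj_eq inj) // eq_sym ?hi ?hj.
Qed.

Lemma cardR (T : finType) (P : pred T) :
  (#|[set x | P x]|%:R : algC) = \sum_x ((P x : nat)%:R).
Proof.
rewrite -sum1_card natr_sum big_mkcond /=; apply: eq_bigr => x _.
by rewrite inE; case: (P x).
Qed.

Lemma cnt_avoid (D T : finType) (h : D -> T) : injective h ->
  \sum_x (([forall d, h d != x] : bool) : nat)%:R = (#|T|%:R - #|D|%:R : algC).
Proof.
move=> inj; rewrite -cardR.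
have -> : [set x | [forall d, h d != x]] = ~: [set h d | d in D].
  apply/setP => x; rewrite !inE; apply/forallP/negP.
  - by move=> H /imsetP [d _ e]; have := H d; rewrite e eqxx.
  - by move=> H d; apply/eqP => e; apply: H; apply/imsetP; exists d.
have := cardsC [set h d | d in D]; rewrite card_imset // => <-.
by rewrite natrD addrAC subrr add0r.
Qed.

Lemma count_eq s t q :
  ((num_proper_colourings (@gedge s t) q)%:R : algC) =
  (q ^_ (s + t))%:R * ((q%:R - t%:R) * (q%:R - s%:R) - (q%:R - (s + t)%:R)).
Proof.
rewrite /num_proper_colourings.
rewrite -(on_card_preimset (f := @phi s t q)); last first.
  by apply: onW_bij; exists (@psi s t q); [exact: phiK | exact: psiK].
have -> : #|(@phi s t q) @^-1: [set f : {ffun GV s t -> 'I_q} | [forall x, forall y, gedge x y ==> (f x != f y)]]|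
   = #|[set u : {ffun ('I_s + 'I_t) -> 'I_q} * 'I_q * 'I_q | [&& injectiveb u.1.1, [forall j, u.1.1 (inr j) != u.1.2],
                  [forall i, u.1.1 (inl i) != u.2] & u.1.2 != u.2]]|.
  by apply: eq_card => [[[g x] y]]; rewrite !inE proper_phi.
rewrite cardR.
pose F (g : {ffun ('I_s + 'I_t) -> 'I_q}) (x y : 'I_q) : algC :=
  (([&& injectiveb g, [forall j, g (inr j) != x], [forall i, g (inl i) != y] & x != y] : bool) : nat)%:R.
transitivity (\sum_g \sum_x \sum_y F g x y).
  by rewrite pair_bigA pair_bigA; apply: eq_bigr => [[[g x] y]].
set K := (_ - _ in RHS).
transitivity (\sum_(g : {ffun ('I_s + 'I_t) -> 'I_q}) ((injectiveb g : nat)%:R * K)).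
  apply: eq_bigr => g _.
  case: (boolP (injectiveb g)) => [ij|nij]; last first.
    by rewrite mul0r big1 // => x _; rewrite big1 // => y _; rewrite /F (negbTE nij).
  have inj := injectiveP _ ij.
  rewrite mul1r.
  have SA : \sum_y (([forall i, g (inl i) != y] : bool) : nat)%:R = (q%:R - s%:R : algC).
    by rewrite (cnt_avoid (h := fun i => g (inl i))) ?card_ord // => i j /inj [].
  have SB : \sum_y (([forall j, g (inr j) != y] : bool) : nat)%:R = (q%:R - t%:R : algC).
    by rewrite (cnt_avoid (h := fun i => g (inr i))) ?card_ord // => i j /inj [].
  have SAB : \sum_y (([forall j, g (inr j) != y] && [forall i, g (inl i) != y] : bool) : nat)%:R
     = (q%:R - (s + t)%:R : algC).
    have := cnt_avoid inj; rewrite card_ord card_sum !card_ord natrD => <-.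
    apply: eq_bigr => y _.
    congr (_%:R); congr (nat_of_bool _); apply/idP/idP.
    - by case/andP=> /forallP h1 /forallP h2; apply/forallP => [[i|j]].
    - by move/forallP=> h; apply/andP; split; apply/forallP => i; apply: h.
  rewrite /K -SA -SB -SAB mulr_suml -sumrB; apply: eq_bigr => x _.
  rewrite mulr_sumr (bigD1 x) //= [X in _ = X - _](bigD1 x) //=.
  rewrite {1}/F eqxx !andbF /= add0r -natrM mulnb addrAC subrr add0r.
  apply: eq_bigr => y yx.
  by rewrite /F ij eq_sym yx andbT -natrM mulnb.
rewrite -mulr_suml; congr (_ * _).
have := card_inj_ffuns ('I_s + 'I_t)%type 'I_q.
rewrite card_sum !card_ord => <-.
by rewrite cardR.
Qed.

Lemma intr_natR (m : nat) : ((m%:R : int)%:~R : algC) = m%:R.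
Proof. by rewrite natz. Qed.

Lemma ffactR (q m : nat) : ((q ^_ m)%:R : algC) = \prod_(i < m) (q%:R - i%:R).
Proof.
elim: m => [|m IH]; first by rewrite ffactn0 big_ord0.
rewrite big_ord_recr /= -IH ffactnSr natrM.
case: (leqP m q) => [lemq | ltqm]; first by rewrite natrB.
by rewrite ffact_small // !mul0r.
Qed.

Theorem theorem4 (a : algC) :
  a \in Aint -> in_quadratic_field a ->
  exists n : nat, chromatic_root (a + n%:R).
Proof.
move=> Aa Qa; have [b [c H]] := quad_int Aa Qa.
have [s [t [n [E1 E2]]]] := params b c.
exists n, (GV s t), (@gedge s t).
pose Q : {poly algC} := ('X - t%:R%:P) * ('X - s%:R%:P) - ('X - (s + t)%:R%:P).
exists ((\prod_(i < s + t) ('X - i%:R%:P)) * Q); split.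
- exact: gedge_simple.
- move=> q _; rewrite count_eq ffactR hornerM horner_prod /Q.
  rewrite !hornerE; congr (_ * _); by apply: eq_bigr => i _; rewrite !hornerE.
- have E1' := congr1 (fun z : int => (z%:~R : algC)) E1.
  have E2' := congr1 (fun z : int => (z%:~R : algC)) E2.
  move: E1' E2'; rewrite /= !expr2 !intrD !intrM !intr_natR => E1' E2'.
  rewrite /root hornerM /Q !hornerE mulf_eq0; apply/orP; right; apply/eqP.
  move: E1' E2'; rewrite !natrD !natrM => E1' E2'.
  have key : forall (S T N A B C : algC),
    (A + N - T) * (A + N - S) - (A + N - (S + T)) =
    (A ^+ 2 - B * A + C) + ((B + 2 * N) - (S + T + 1)) * (A + N)
     + ((S * T + S + T) - (C + N * N + B * N)).
    by move=> *; ring.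
  by rewrite (key _ _ _ _ b%:~R c%:~R) H E1' E2' !subrr mul0r !addr0.
Qed.
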